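(* Let $d\ge1$ be an integer and let $G$ be a triangle-free graph on $n$ vertices with maximum degree $d$. Then for all $\lambda>0$, writing $w=W(d\log(1+\lambda))$, \[ P_G(\lambda) \;\ge\; \exp\!\left(\left[w^2+2w\right]\frac{n}{2d}\right). \] In particular (taking $\lambda=1$), for every $\varepsilon>0$ there is $d_0$ such that if $d\ge d_0$ then $G$ has at least $\exp\!\left[\left(\frac12-\varepsilon\right)\frac{\log^2 d}{d}n\right]$ independent sets.
   Context: For a graph $G$, $P_G(\lambda)=\sum_{J}\lambda^{|J|}$, the sum over all independent sets $J$ of $G$ (including the empty set), is the hard-core partition function (independence polynomial). For $z>0$, $W(z)$ denotes the unique positive real with $W(z)e^{W(z)}=z$. Logarithms are natural. *)

(* Defs.v *)
From mathcomp Require Import all_boot.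
From Stdlib Require Import Reals ClassicalEpsilon.
Set Implicit Arguments. Unset Strict Implicit. Unset Printing Implicit Defensive.

Definition LambertW (z : R) : R :=
  epsilon (inhabits R0) (fun w : R => Rlt 0 w /\ Rmult w (exp w) = z).

Definition simple_graph (n : nat) (adj : rel 'I_n) : Prop :=
  (forall u v, adj u v = adj v u) /\ (forall u, adj u u = false).

Definition triangle_free (n : nat) (adj : rel 'I_n) : Prop :=
  forall u v w, adj u v -> adj v w -> adj u w -> False.

Definition degree (n : nat) (adj : rel 'I_n) (u : 'I_n) : nat :=
  #|[set v | adj u v]|.

Definition max_degree_eq (n : nat) (adj : rel 'I_n) (d : nat) : Prop :=
  (forall u, (degree adj u <= d)%nat) /\ (exists u, degree adj u = d).

Definition independent (n : nat) (adj : rel 'I_n) (J : {set 'I_n}) : bool :=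
  [forall u in J, forall v in J, ~~ adj u v].

Definition PG (n : nat) (adj : rel 'I_n) (lam : R) : R :=
  \big[Rplus/R0]_(J : {set 'I_n} | independent adj J) (pow lam #|J|).

Definition num_indep (n : nat) (adj : rel 'I_n) : nat :=
  #|[set J : {set 'I_n} | independent adj J]|.

(* Main.v *)
Require Import Defs.
From mathcomp Require Import all_boot.
From Stdlib Require Import Reals.
From Stdlib Require Import Lra Lia ClassicalEpsilon ZArith.
From mathcomp Require Import Rstruct.
Open Scope R_scope.
Set Implicit Arguments. Unset Strict Implicit.


Lemma disjP (T:finType) (A B : {set T}) :
  reflect (forall x, x \in A -> x \in B -> False) [disjoint A & B].
Proof.
rewrite disjoint_subset; apply: (iffP subsetP) => H x Ha.
  by move=> Hb; move: (H x Ha); rewrite inE Hb.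
by rewrite inE; apply/negP => Hb; exact: H x Ha Hb.
Qed.

Lemma big_le (I:finType) (P:pred I) (F G : I -> R) :
  (forall i, P i -> F i <= G i) ->
  \big[Rplus/R0]_(i | P i) F i <= \big[Rplus/R0]_(i | P i) G i.
Proof.
move=> H; apply: (big_ind2 (fun x y => x <= y)) => [|x1 x2 y1 y2 ? ?|i Hi];
  [lra|lra|exact: H].
Qed.

Lemma big_ge0 (I:finType) (P:pred I) (F : I -> R) :
  (forall i, P i -> 0 <= F i) -> 0 <= \big[Rplus/R0]_(i | P i) F i.
Proof.
move=> H; apply: (big_ind (fun x => 0 <= x)) => [|x y ? ?|i Hi];
  [lra|lra|exact: H].
Qed.

Lemma big_opp (I:finType) (P:pred I) (F : I -> R) :
  \big[Rplus/R0]_(i | P i) (- F i) = - \big[Rplus/R0]_(i | P i) F i.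
Proof.
symmetry; apply: (big_morph Ropp); [move=> x y; lra | lra].
Qed.

Lemma INR_sum (I:finType) (P:pred I) (f : I -> nat) :
  INR (\big[addn/O]_(i | P i) f i) = \big[Rplus/R0]_(i | P i) INR (f i).
Proof.
have Hm : {morph INR : x y / addn x y >-> Rplus x y} by move=> x y; exact: plus_INR.
exact: (big_morph INR Hm).
Qed.

Lemma sum_mull (I:finType) (P:pred I) (F : I -> R) a :
  \big[Rplus/R0]_(i | P i) (a * F i) = a * \big[Rplus/R0]_(i | P i) F i.
Proof. by rewrite big_distrr. Qed.

Lemma sum_mulr (I:finType) (P:pred I) (F : I -> R) a :
  \big[Rplus/R0]_(i | P i) (F i * a) = \big[Rplus/R0]_(i | P i) F i * a.
Proof. by rewrite big_distrl. Qed.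

Lemma sum_add (I:finType) (P:pred I) (F G : I -> R) :
  \big[Rplus/R0]_(i | P i) (F i + G i) = \big[Rplus/R0]_(i | P i) F i + \big[Rplus/R0]_(i | P i) G i.
Proof. by rewrite big_split. Qed.

Section SubsetSums.
Variable T : finType.

Lemma L0 (f : {set T} -> R) (A : {set T}) a : a \in A ->
  \big[Rplus/R0]_(S : {set T} | S \subset A) f S =
  \big[Rplus/R0]_(S : {set T} | S \subset A :\ a) f S +
  \big[Rplus/R0]_(S : {set T} | S \subset A :\ a) f (a |: S).
Proof.
move=> Ha; rewrite (bigID (fun S : {set T} => a \in S)) /= Rplus_comm; congr Rplus.
  by apply: eq_bigl => S; rewrite subsetD1.
rewrite (reindex_onto (fun S => a |: S) (fun S => S :\ a)); last first.
  by move=> S /andP[_ HS]; rewrite setD1K.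
apply: eq_bigl => S; rewrite setU11 andbT subsetD1.
apply/idP/idP.
  move=> /andP[HS /eqP HE]; rewrite -HE setD11 andbT.
  by apply: subset_trans HS; apply: subsetDl.
move=> /andP[HS Hn]; rewrite setU1K // eqxx andbT subUset sub1set Ha HS.
by [].
Qed.

Lemma L1 (x : R) (A : {set T}) :
  \big[Rplus/R0]_(S : {set T} | S \subset A) x ^ #|S| = (1 + x) ^ #|A|.
Proof.
move: {2}#|A| (erefl #|A|) => m; elim: m A => [|m IH] A HA.
  move/eqP: HA; rewrite cards_eq0 => /eqP ->.
  rewrite (big_pred1 set0) ?cards0 //= => S; rewrite subset0.
  by [].
have : A != set0 by rewrite -card_gt0 HA.
case/set0Pn => a Ha.
have HA' : #|A :\ a| = m by move: HA; rewrite (cardsD1 a) Ha => -[].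
rewrite (L0 _ Ha) IH //.
rewrite (eq_bigr (fun S : {set T} => x * x ^ #|S|)); last first.
  move=> S HS; rewrite cardsU1.
  have -> : a \notin S by move: HS; rewrite subsetD1 => /andP[].
  by [].
rewrite sum_mull IH // HA' HA /=; ring.
Qed.

Lemma L2 (x : R) (A : {set T}) :
  (1 + x) * \big[Rplus/R0]_(S : {set T} | S \subset A) (INR #|S| * x ^ #|S|) =
  INR #|A| * x * (1 + x) ^ #|A|.
Proof.
move: {2 3}#|A| (erefl #|A|) => m; elim: m A => [|m IH] A HA.
  move/eqP: HA; rewrite cards_eq0 => /eqP ->.
  rewrite (big_pred1 set0) ?cards0 /=; first ring.
  by move=> S; rewrite subset0.
have : A != set0 by rewrite -card_gt0 HA.
case/set0Pn => a Ha.
have HA' : #|A :\ a| = m by move: HA; rewrite (cardsD1 a) Ha => -[].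
rewrite (L0 _ Ha).
have E : \big[Rplus/R0]_(S : {set T} | S \subset A :\ a) (INR #|a |: S| * x ^ #|a |: S|)
  = \big[Rplus/R0]_(S : {set T} | S \subset A :\ a) (INR #|S| * x ^ #|S| * x + x * x ^ #|S|).
  apply: eq_bigr => S HS; rewrite cardsU1.
  have -> : a \notin S by move: HS; rewrite subsetD1 => /andP[].
  rewrite plus_INR pow_add /=; ring.
rewrite E sum_add sum_mulr sum_mull L1 HA'.
set T' := \big[Rplus/R0]_(S : {set T} | S \subset A :\ a) (INR #|S| * x ^ #|S|).
have IH' : (1 + x) * T' = INR m * x * (1 + x) ^ m by rewrite /T' IH // ?HA'.
transitivity ((1 + x) * ((1 + x) * T') + x * (1 + x) * (1 + x) ^ m); first ring.
rewrite IH' S_INR HA /=; ring.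
Qed.
End SubsetSums.


Lemma sum_ind (I:finType) (P Q : pred I) (F : I -> R) :
  \big[Rplus/R0]_(i | P i) (F i * INR (Q i)) = \big[Rplus/R0]_(i | P i && Q i) F i.
Proof.
rewrite (bigID Q) /= [X in _ + X]big1 ?Rplus_0_r.
  by apply: eq_bigr => i /andP[_ ->] /=; ring.
by move=> i /andP[_ /negbTE ->] /=; ring.
Qed.

Lemma sum_const (m : nat) (X : R) :
  \big[Rplus/R0]_(v : 'I_m) X = INR m * X.
Proof.
rewrite big_const card_ord; elim: m => [|m IH]; first (simpl; ring).
rewrite iterS IH S_INR; ring.
Qed.

Section Graph.
Variable n : nat.
Variable adj : rel 'I_n.
Hypothesis Hsym : forall u v, adj u v = adj v u.
Hypothesis Hirr : forall u, adj u u = false.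
Variable lam : R.

Definition wt (J : {set 'I_n}) := lam ^ #|J|.
Definition Sm (g : {set 'I_n} -> R) :=
  \big[Rplus/R0]_(J : {set 'I_n} | independent adj J) (wt J * g J).
Definition Nb (v : 'I_n) : {set 'I_n} := [set u | adj v u].

Lemma indP (J : {set 'I_n}) : reflect (forall u v, u \in J -> v \in J -> ~~ adj u v) (independent adj J).
Proof.
apply: (iffP idP) => [H u v Hu Hv | H].
  by move/forall_inP: H => /(_ u Hu) /forall_inP /(_ v Hv).
by apply/forall_inP => u Hu; apply/forall_inP => v Hv; apply: H.
Qed.

Lemma Sm_sum (g : 'I_n -> {set 'I_n} -> R) :
  \big[Rplus/R0]_(v : 'I_n) Sm (g v) = Sm (fun J => \big[Rplus/R0]_(v : 'I_n) g v J).
Proof.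
rewrite /Sm exchange_big /=; apply: eq_bigr => J _; by rewrite sum_mull.
Qed.

Lemma sumA : \big[Rplus/R0]_(v : 'I_n) Sm (fun J => INR (v \in J)) = Sm (fun J => INR #|J|).
Proof.
rewrite Sm_sum /Sm; apply: eq_bigr => J _; congr Rmult.
rewrite -INR_sum; congr INR.
rewrite -sum1_card [RHS]big_mkcond /=; apply: eq_bigr => i _; by case: (i \in J).
Qed.

Lemma Bv v : (1 + lam) * Sm (fun J => INR (v \in J)) =
             lam * Sm (fun J => INR [disjoint J & Nb v]).
Proof.
rewrite /Sm !sum_ind.
rewrite [in RHS](bigID (fun J : {set 'I_n} => v \in J)) /=.
have -> : \big[Rplus/R0]_(i | (independent adj i && [disjoint i & Nb v]) && (v \in i)) wt i
        = \big[Rplus/R0]_(i | independent adj i && (v \in i)) wt i.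
  apply: eq_bigl => J; case HJ: (independent adj J); case vJ: (v \in J); rewrite /= ?andbF ?andbT //.
  apply/disjP => u Hu; rewrite inE => Hvu.
  by move/indP: HJ => /(_ v u vJ Hu); rewrite Hvu.
set Y := \big[Rplus/R0]_(i | (independent adj i && [disjoint i & Nb v]) && (v \notin i)) wt i.
have -> : \big[Rplus/R0]_(i | independent adj i && (v \in i)) wt i = lam * Y.
  rewrite (reindex_onto (fun J => v |: J) (fun J => J :\ v)); last first.
    by move=> J /andP[_ HJ]; rewrite setD1K.
  rewrite /Y -sum_mull; apply: congr_big => //.
    move=> J; rewrite setU11 andbT; apply/idP/idP.
      move=> /andP[Hind /eqP HE].
      have vJ : v \notin J by rewrite -HE setD11.
      rewrite vJ andbT; apply/andP; split.
        apply/indP => x y Hx Hy; move/indP: Hind; apply; by rewrite inE ?Hx ?Hy orbT.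
      apply/disjP => u Hu; rewrite inE => Hvu.
      by move/indP: Hind => /(_ v u (setU11 _ _)); rewrite inE Hu orbT Hvu => /(_ isT).
    move=> /andP[/andP[Hind Hdis] vJ]; rewrite setU1K // eqxx andbT.
    apply/indP => x y; rewrite !inE => /orP[/eqP-> | Hx] /orP[/eqP-> | Hy].
    - by rewrite Hirr.
    - by apply/negP => Hvy; move/disjP: Hdis => /(_ y Hy); rewrite inE Hvy => /(_ isT).
    - by rewrite Hsym; apply/negP => Hvy; move/disjP: Hdis => /(_ x Hx); rewrite inE Hvy => /(_ isT).
    - by move/indP: Hind; apply.
  move=> J /andP[_ /eqP HE].
  have vJ : v \notin J by rewrite -HE setD11.
  rewrite /wt cardsU1 vJ /= add0n; ring.
ring.
Qed.

Lemma Cbound (d : nat) : (forall u, leq #|Nb u| d) -> 0 <= lam ->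
  \big[Rplus/R0]_(v : 'I_n) Sm (fun J => INR #|J :&: Nb v|) <=
  INR d * \big[Rplus/R0]_(v : 'I_n) Sm (fun J => INR (v \in J)).
Proof.
move=> Hd Hl; rewrite Sm_sum sumA /Sm -sum_mull; apply: big_le => J _.
have Hw : 0 <= wt J by apply: pow_le.
rewrite -INR_sum.
have Hn : leq (\big[addn/O]_(v : 'I_n) #|J :&: Nb v|) (#|J| * d).
  rewrite (eq_bigr (fun v => \sum_(u in J) adj v u)); last first.
    move=> v _; rewrite -sum1_card big_mkcond /= [RHS]big_mkcond /=.
    by apply: eq_bigr => u _; rewrite !inE; case: (u \in J); case: (adj v u).
  rewrite exchange_big /= -sum_nat_const; apply: leq_sum => u _.
  apply: leq_trans (Hd u); rewrite -sum1_card [X in leq _ X]big_mkcond /=.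
  by rewrite leq_eqVlt; apply/orP; left; apply/eqP; apply: eq_bigr => v _; rewrite inE Hsym.
apply: Rle_trans (Rmult_le_compat_l _ _ _ Hw (le_INR _ _ (elimT leP Hn))) _.
rewrite mult_INR; apply: Req_le; ring.
Qed.

End Graph.


Lemma setUDI (T : finType) (K S N : {set T}) : [disjoint K & N] -> S \subset N ->
  (K :|: S) :\: N = K /\ (K :|: S) :&: N = S.
Proof.
move=> /disjP HKN /subsetP HSN; split; apply/setP => x; rewrite !inE;
  case Kx: (x \in K); case Sx: (x \in S); case Nx: (x \in N) => //=;
  try (by exfalso; exact: HKN x Kx Nx); by move: (HSN x Sx); rewrite Nx.
Qed.

Section Fiber.
Variable n : nat.
Variable adj : rel 'I_n.
Hypothesis Hsym : forall u v, adj u v = adj v u.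
Hypothesis Hirr : forall u, adj u u = false.
Hypothesis Htf : triangle_free adj.
Variable lam : R.
Variable v : 'I_n.

Definition KK (K : {set 'I_n}) := independent adj K && [disjoint K & Nb adj v].
Definition FF (K : {set 'I_n}) : {set 'I_n} :=
  [set u in Nb adj v | [forall x in K, ~~ adj u x]].

Lemma FD (f : {set 'I_n} -> R) :
  \big[Rplus/R0]_(J : {set 'I_n} | independent adj J) f J =
  \big[Rplus/R0]_(K : {set 'I_n} | KK K)
     \big[Rplus/R0]_(S : {set 'I_n} | S \subset FF K) f (K :|: S).
Proof.
set N := Nb adj v.
rewrite (partition_big (fun J => J :\: N) KK); last first.
  move=> J HJ; apply/andP; split.
    apply/indP => x y; rewrite !inE => /andP[_ Hx] /andP[_ Hy].
    by move/indP: HJ; apply.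
  by apply/disjP => x; rewrite !inE => /andP[/negbTE ->].
apply: eq_bigr => K HK.
rewrite (reindex_onto (fun S => K :|: S) (fun J => J :&: N)); last first.
  move=> J /andP[_ /eqP <-]; apply/setP => x; rewrite !inE.
  by case: (x \in J); case: (adj v x).
apply: eq_bigl => S.
move: HK => /andP[HKi HKd].
apply/idP/idP.
  move=> /andP[/andP[Hind _] /eqP HS].
  apply/subsetP => u Hu; rewrite inE.
  have HuN : u \in N by rewrite -HS in Hu; move: Hu; rewrite inE => /andP[].
  rewrite HuN /=; apply/forall_inP => x Hx.
  by move/indP: Hind; apply; rewrite inE ?Hu ?Hx ?orbT.
move=> /subsetP HS.
have HSN : S \subset N by apply/subsetP => u /HS; rewrite inE => /andP[].
have [E1 E2] := setUDI HKd HSN.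
rewrite E1 E2 !eqxx !andbT.
apply/indP => x y; rewrite !inE => /orP[Hx | Hx] /orP[Hy | Hy].
- by move/indP: HKi; apply.
- move: (HS y Hy); rewrite inE => /andP[_ /forall_inP /(_ x Hx)].
  by rewrite Hsym.
- by move: (HS x Hx); rewrite inE => /andP[_ /forall_inP /(_ y Hy)].
- apply/negP => Hxy.
  move/subsetP: HSN => HSN'.
  have := HSN' x Hx; have := HSN' y Hy; rewrite /N !inE => Hvy Hvx.
  exact: Htf Hvx Hxy Hvy.
Qed.

End Fiber.

Lemma lin3 (I:finType) (P:pred I) (A B C : I -> R) a b c :
  (forall i, P i -> a * A i - b * B i <= c * C i) ->
  a * \big[Rplus/R0]_(i | P i) A i - b * \big[Rplus/R0]_(i | P i) B i
    <= c * \big[Rplus/R0]_(i | P i) C i.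
Proof.
move=> H; rewrite -!sum_mull.
have := @big_le _ P (fun i => a * A i + - (b * B i)) (fun i => c * C i).
rewrite sum_add big_opp => H'; apply: H' => i Pi; have := H i Pi; lra.
Qed.

Lemma tangent (q w : R) (Y : nat) : 0 < q ->
  q ^ Y * (1 + w - INR Y * ln q) <= exp w.
Proof.
move=> Hq.
have E : q ^ Y = exp (INR Y * ln q) by rewrite -Rpower_pow //.
rewrite E.
have -> : exp w = exp (INR Y * ln q) * exp (w - INR Y * ln q)
  by rewrite -exp_plus; congr exp; ring.
apply: Rmult_le_compat_l; first exact: Rlt_le (exp_pos _).
have := exp_ineq1_le (w - INR Y * ln q); lra.
Qed.

Section Fiber2.
Variable n : nat.
Variable adj : rel 'I_n.
Hypothesis Hsym : forall u v, adj u v = adj v u.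
Hypothesis Hirr : forall u, adj u u = false.
Hypothesis Htf : triangle_free adj.
Variable lam : R.
Hypothesis Hlam : 0 < lam.
Variable v : 'I_n.

Lemma wtU (K S : {set 'I_n}) : KK adj v K -> S \subset FF adj v K ->
  wt lam (K :|: S) = wt lam K * lam ^ #|S|.
Proof.
move=> /andP[_ HKd] HS.
have HSN : S \subset Nb adj v by apply: subset_trans HS _; apply/subsetP => u; rewrite inE => /andP[].
have HKS : [disjoint K & S] by apply: disjointWr HSN HKd.
rewrite /wt; have := cardsUI K S; rewrite (disjoint_setI0 HKS) cards0 addn0 => ->.
by rewrite pow_add.
Qed.

Lemma subFN (K S : {set 'I_n}) : S \subset FF adj v K -> S \subset Nb adj v.
Proof. move=> HS; apply: subset_trans HS _; apply/subsetP => u; rewrite inE => /andP[]. done. Qed.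

Lemma ZF (K : {set 'I_n}) : KK adj v K ->
  \big[Rplus/R0]_(S : {set 'I_n} | S \subset FF adj v K) (wt lam (K :|: S) * 1)
  = wt lam K * (1 + lam) ^ #|FF adj v K|.
Proof.
move=> HK; rewrite -L1 -sum_mull; apply: eq_bigr => S HS.
by rewrite wtU // Rmult_1_r.
Qed.

Lemma CF (K : {set 'I_n}) : KK adj v K ->
  \big[Rplus/R0]_(S : {set 'I_n} | S \subset FF adj v K)
     (wt lam (K :|: S) * INR #|(K :|: S) :&: Nb adj v|)
  = wt lam K * (INR #|FF adj v K| * lam * (1 + lam) ^ #|FF adj v K| / (1 + lam)).
Proof.
move=> HK; rewrite -L2.
have -> : \big[Rplus/R0]_(S : {set 'I_n} | S \subset FF adj v K)
     (wt lam (K :|: S) * INR #|(K :|: S) :&: Nb adj v|) =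
   wt lam K * \big[Rplus/R0]_(S : {set 'I_n} | S \subset FF adj v K) (INR #|S| * lam ^ #|S|).
  rewrite -sum_mull; apply: eq_bigr => S HS.
  have [_ E2] := setUDI (proj2 (andP HK)) (subFN HS).
  rewrite wtU // E2; ring.
field; lra.
Qed.

Lemma BF (K : {set 'I_n}) : KK adj v K ->
  \big[Rplus/R0]_(S : {set 'I_n} | S \subset FF adj v K)
     (wt lam (K :|: S) * INR [disjoint K :|: S & Nb adj v])
  = wt lam K.
Proof.
move=> HK.
have -> : \big[Rplus/R0]_(S : {set 'I_n} | S \subset FF adj v K)
     (wt lam (K :|: S) * INR [disjoint K :|: S & Nb adj v]) =
   \big[Rplus/R0]_(S : {set 'I_n} | S \subset FF adj v K)
     (wt lam (K :|: S) * INR (S == set0)).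
  apply: eq_bigr => S HS.
  have [_ E2] := setUDI (proj2 (andP HK)) (subFN HS).
  by rewrite -setI_eq0 E2.
rewrite sum_ind (big_pred1 set0) ?setU0 // => S.
by rewrite /=; case: eqP => [-> | _]; rewrite ?sub0set ?andbF.
Qed.

Lemma Dv (w : R) :
  (1 + w) * Sm adj lam (fun _ => 1)
  - ln (1 + lam) * (1 + lam) / lam * Sm adj lam (fun J => INR #|J :&: Nb adj v|)
  <= exp w * Sm adj lam (fun J => INR [disjoint J & Nb adj v]).
Proof.
rewrite /Sm !(FD Hsym Htf v).
apply: lin3 => K HK.
rewrite ZF // CF // BF //.
set s := wt lam K; set Y := #|FF adj v K|.
have Hs : 0 <= s by apply: pow_le; lra.
have Ht := tangent w Y (_ : 0 < 1 + lam).
have -> : (1 + w) * (s * (1 + lam) ^ Y) - ln (1 + lam) * (1 + lam) / lam *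
     (s * (INR Y * lam * (1 + lam) ^ Y / (1 + lam)))
   = s * ((1 + lam) ^ Y * (1 + w - INR Y * ln (1 + lam))) by field; lra.
rewrite (Rmult_comm (exp w)); apply: Rmult_le_compat_l => //.
apply: Ht; lra.
Qed.

End Fiber2.


Lemma occ (n : nat) (adj : rel 'I_n) (d : nat)
  (Hsym : forall u v, adj u v = adj v u) (Hirr : forall u, adj u u = false)
  (Htf : triangle_free adj) (Hdeg : forall u, leq #|Nb adj u| d)
  (lam : R) (Hlam : 0 < lam) (w : R) (Hw : 0 < w)
  (Hwe : w * exp w = INR d * ln (1 + lam)) :
  lam / (1 + lam) * exp (- w) * INR n * Sm adj lam (fun _ => 1)
   <= Sm adj lam (fun J => INR #|J|).
Proof.
set Z := Sm adj lam (fun _ => 1).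
set A := \big[Rplus/R0]_(v : 'I_n) Sm adj lam (fun J => INR (v \in J)).
set B := \big[Rplus/R0]_(v : 'I_n) Sm adj lam (fun J => INR [disjoint J & Nb adj v]).
set C := \big[Rplus/R0]_(v : 'I_n) Sm adj lam (fun J => INR #|J :&: Nb adj v|).
set q := 1 + lam; set L := ln q; set E := exp w.
have HL : 0 < L by rewrite /L /q -ln_1; apply: ln_increasing; lra.
have HE : 0 < E by apply: exp_pos.
have H1 : (1 + w) * (INR n * Z) - L * q / lam * C <= E * B.
  rewrite -(sum_const n Z) /C /B /E.
  apply: lin3 => v _; exact: Dv.
have H2 : C <= INR d * A by apply: Cbound => //; lra.
have H3 : q * A = lam * B.
  rewrite /A /B -!sum_mull; apply: eq_bigr => v _; exact: Bv.
have H4 : A = Sm adj lam (fun J => INR #|J|) by rewrite /A sumA.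
rewrite -H4.
have H5 : L * q / lam * C <= w * E * B.
  have -> : w * E * B = L * q / lam * (INR d * A).
    have -> : L * q / lam * (INR d * A) = L * INR d * ((q * A) / lam) by field; lra.
    rewrite H3 /E.
    have -> : lam * B / lam = B by field; lra.
    rewrite /L /q Hwe; ring.
  apply: Rmult_le_compat_l => //.
  apply: Rmult_le_pos; last by apply: Rlt_le; apply: Rinv_0_lt_compat.
  apply: Rmult_le_pos; rewrite /q; lra.
have H6 : INR n * Z <= E * B.
  have : (1 + w) * (INR n * Z) <= (1 + w) * (E * B) by nra.
  move=> H; apply: (Rmult_le_reg_l (1 + w)) => //; lra.
have -> : A = lam / q * B by apply: (Rmult_eq_reg_l q); [rewrite H3; field | ]; rewrite /q; lra.
rewrite exp_Ropp -/E.
have Hq : 0 < lam / q by apply: Rdiv_lt_0_compat; rewrite /q; lra.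
have -> : lam / q * / E * INR n * Z = lam / q * (/ E * (INR n * Z)) by ring.
apply: Rmult_le_compat_l; first lra.
apply: (Rmult_le_reg_l E) => //.
have -> : E * (/ E * (INR n * Z)) = INR n * Z by field; lra.
by [].
Qed.


Lemma LambertW_spec z : 0 < z -> 0 < LambertW z /\ LambertW z * exp (LambertW z) = z.
Proof.
move=> Hz; rewrite /LambertW.
pose P := fun w => 0 < w /\ w * exp w = z.
suff : P (epsilon (inhabits R0) P) by [].
apply: epsilon_spec.
have Hc : continuity (fun x => x * exp x - z) by reg.
have Hez : 1 + z < exp z by apply: exp_ineq1; lra.
have [x [Hx Hfx]] := IVT (fun x => x * exp x - z) 0 z Hc Hz
   (ltac:(cbv beta; lra)) (ltac:(cbv beta; nra)).
exists x; split; last lra.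
case: (Rle_lt_or_eq_dec 0 x (proj1 Hx)) => [H0|Hx0]; first lra.
by rewrite -Hx0 Rmult_0_l in Hfx; lra.
Qed.

Lemma deriv_big (I : finType) (P : pred I) (f f' : I -> R -> R) (y : R) :
  (forall i, derivable_pt_lim (f i) y (f' i y)) ->
  derivable_pt_lim (fun x => \big[Rplus/R0]_(i | P i) f i x) y
                   (\big[Rplus/R0]_(i | P i) f' i y).
Proof.
move=> H.
suff : forall r, derivable_pt_lim (fun x => \big[Rplus/R0]_(i <- r | P i) f i x) y
                   (\big[Rplus/R0]_(i <- r | P i) f' i y) by apply.
elim=> [|i r IH].
  rewrite big_nil; apply: (derivable_pt_lim_ext (fun _ => 0)).
    by move=> z; rewrite big_nil.
  exact: derivable_pt_lim_const.
rewrite big_cons; case Pi: (P i).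
  apply: (derivable_pt_lim_ext (fun x => f i x + \big[Rplus/R0]_(j <- r | P j) f j x)).
    by move=> z; rewrite big_cons Pi.
  exact: derivable_pt_lim_plus (H i) IH.
apply: (derivable_pt_lim_ext (fun x => \big[Rplus/R0]_(j <- r | P j) f j x)) => //.
by move=> z; rewrite big_cons Pi.
Qed.


Section D.
Variable x : R.
Lemma dmul f g lf lg : derivable_pt_lim f x lf -> derivable_pt_lim g x lg ->
  derivable_pt_lim (fun y => f y * g y) x (lf * g x + f x * lg).
Proof. move=> H1 H2; exact: derivable_pt_lim_mult H1 H2. Qed.
Lemma dcomp f g lf lg : derivable_pt_lim f x lf -> derivable_pt_lim g (f x) lg ->
  derivable_pt_lim (fun y => g (f y)) x (lg * lf).
Proof. move=> H1 H2; exact: derivable_pt_lim_comp H1 H2. Qed.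
Lemma dplus f g lf lg : derivable_pt_lim f x lf -> derivable_pt_lim g x lg ->
  derivable_pt_lim (fun y => f y + g y) x (lf + lg).
Proof. move=> H1 H2; exact: derivable_pt_lim_plus H1 H2. Qed.
Lemma dopp f lf : derivable_pt_lim f x lf ->
  derivable_pt_lim (fun y => - f y) x (- lf).
Proof. move=> H1; exact: derivable_pt_lim_opp H1. Qed.
Lemma dconst a : derivable_pt_lim (fun _ => a) x 0.
Proof. exact: derivable_pt_lim_const. Qed.
Lemma did : derivable_pt_lim (fun y => y) x 1.
Proof. exact: derivable_pt_lim_id. Qed.
Lemma dval f l l' : derivable_pt_lim f x l -> l = l' -> derivable_pt_lim f x l'.
Proof. by move=> H <-. Qed.
End D.

Section Main.
Variable n : nat.
Variable adj : rel 'I_n.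
Hypothesis Hsym : forall u v, adj u v = adj v u.
Hypothesis Hirr : forall u, adj u u = false.
Hypothesis Htf : triangle_free adj.
Variable d : nat.
Hypothesis Hdeg : forall u, leq #|Nb adj u| d.
Hypothesis Hd1 : 1 <= INR d.

Definition Zd (y : R) :=
  \big[Rplus/R0]_(J : {set 'I_n} | independent adj J) (INR #|J| * y ^ Nat.pred #|J|).

Lemma dZ y : derivable_pt_lim (fun x => PG adj x) y (Zd y).
Proof.
apply: (@deriv_big _ (fun J => independent adj J) (fun J x => x ^ #|J|)
  (fun J y => INR #|J| * y ^ Nat.pred #|J|) y) => J.
exact: derivable_pt_lim_pow.
Qed.

Lemma xZd y : y * Zd y = Sm adj y (fun J => INR #|J|).
Proof.
rewrite /Zd /Sm -sum_mull; apply: eq_bigr => J _; rewrite /wt.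
by case: #|J| => [|k] /=; ring.
Qed.

Lemma ZSm y : Sm adj y (fun _ => 1) = PG adj y.
Proof. by rewrite /Sm /PG; apply: eq_bigr => J _; rewrite Rmult_1_r. Qed.

Lemma ind0 : independent adj set0.
Proof. by apply/indP => u v; rewrite inE. Qed.

Lemma PG0 : PG adj 0 = 1.
Proof.
rewrite /PG (bigD1 set0) ?ind0 // cards0 big1 /=; first ring.
move=> J /andP[_ HJ]; apply: pow_i; apply/ltP; by rewrite card_gt0.
Qed.

End Main.


Section Main2.
Variable n : nat.
Variable adj : rel 'I_n.
Hypothesis Hsym : forall u v, adj u v = adj v u.
Hypothesis Hirr : forall u, adj u u = false.
Hypothesis Htf : triangle_free adj.
Variable d : nat.
Hypothesis Hdeg : forall u, leq #|Nb adj u| d.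
Hypothesis Hd1 : 1 <= INR d.

Let D := INR d.
Definition Lam (t : R) := exp (t * exp t / D) - 1.
Definition Fn (t : R) := (t ^ 2 + 2 * t) * (INR n / (2 * D)).
Definition kk (t : R) := PG adj (Lam t) * exp (- Fn t).
Definition kd (t : R) :=
  Zd adj (Lam t) * (exp (t * exp t / D) * ((1 * exp t + t * exp t) * / D)) * exp (- Fn t)
  + PG adj (Lam t) * (exp (- Fn t) * (- ((2 * t + 2) * (INR n / (2 * D))))).

Lemma dk t : derivable_pt_lim kk t (kd t).
Proof.
have dg : derivable_pt_lim (fun y => y * exp y / D) t ((1 * exp t + t * exp t) * / D).
  apply: dval.
    apply: (dmul (f := fun y => y * exp y) (g := fun _ => / D)).
      exact: dmul (did t) (derivable_pt_lim_exp t).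
    exact: dconst.
  rewrite /id /=; ring.
have dL : derivable_pt_lim Lam t (exp (t * exp t / D) * ((1 * exp t + t * exp t) * / D)).
  apply: dval.
    apply: (dplus (f := fun y => exp (y * exp y / D)) (g := fun _ => - 1)).
      exact: dcomp dg (derivable_pt_lim_exp _).
    exact: dconst.
  rewrite /id /=; ring.
have dF : derivable_pt_lim (fun y => exp (- Fn y)) t
            (exp (- Fn t) * (- ((2 * t + 2) * (INR n / (2 * D))))).
  apply: dval.
    apply: (dcomp (f := fun y => - Fn y) (g := exp)); last exact: derivable_pt_lim_exp.
    apply: dopp.
    apply: (dmul (f := fun y => y ^ 2 + 2 * y) (g := fun _ => INR n / (2 * D))); last exact: dconst.
    apply: dplus; first exact: derivable_pt_lim_pow.
    apply: (dmul (f := fun _ => 2) (g := fun y => y)); [exact: dconst | exact: did].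
  rewrite /id /=; ring.
apply: dval.
  apply: (dmul (f := fun y => PG adj (Lam y)) (g := fun y => exp (- Fn y))) => //.
  apply: (dcomp (f := Lam) (g := fun x => PG adj x)) => //.
  exact: dL. exact: dZ.
  exact: dF.
rewrite /kd /=; ring.
Qed.

Lemma Dpos : 0 < D.
Proof. rewrite /D; lra. Qed.

Lemma kd_ge0 t : 0 < t -> 0 <= kd t.
Proof.
move=> Ht.
have HD := Dpos.
set g := t * exp t / D.
have Hg : 0 < g by rewrite /g; apply: Rdiv_lt_0_compat => //; apply: Rmult_lt_0_compat => //; apply: exp_pos.
set lam := Lam t.
have Hq : 1 + lam = exp g by rewrite /lam /Lam -/g; ring.
have Hlam : 0 < lam by have := exp_ineq1 g (Rgt_not_eq _ _ Hg); rewrite -Hq; lra.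
have Hwe : t * exp t = INR d * ln (1 + lam) by rewrite Hq ln_exp /g -/D; field; lra.
have Hocc := occ Hsym Hirr Htf Hdeg Hlam Ht Hwe.
rewrite -xZd ZSm exp_Ropp in Hocc.
set X := Zd adj lam in Hocc *; set Zv := PG adj lam in Hocc *.
set q := 1 + lam in Hocc Hq *; set ee := exp t in Hocc *.
have Hee : 0 < ee by apply: exp_pos.
have Hqp : 0 < q by rewrite Hq; apply: exp_pos.
have HX : INR n * Zv <= X * q * ee.
  have H1 : / q * / ee * INR n * Zv <= X.
    apply: (Rmult_le_reg_l lam) => //.
    have -> : lam * (/ q * / ee * INR n * Zv) = lam / q * / ee * INR n * Zv by field; lra.
    exact: Hocc.
  have -> : INR n * Zv = q * ee * (/ q * / ee * INR n * Zv) by field; lra.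
  have -> : X * q * ee = q * ee * X by ring.
  apply: Rmult_le_compat_l => //; nra.
rewrite /kd -/lam -/g -Hq -/q -/X -/Zv.
have -> : X * (q * ((1 * ee + t * ee) * / D)) * exp (- Fn t) +
    Zv * (exp (- Fn t) * - ((2 * t + 2) * (INR n / (2 * D))))
  = exp (- Fn t) * ((1 + t) / D * (X * q * ee - INR n * Zv)) by field; lra.
apply: Rmult_le_pos; first exact: Rlt_le (exp_pos _).
apply: Rmult_le_pos; last lra.
apply: Rlt_le; apply: Rdiv_lt_0_compat => //; lra.
Qed.

Lemma kk_ge1 t : 0 < t -> 1 <= kk t.
Proof.
move=> Ht.
have [c [Hc Hct]] := MVT_cor2 kk kd 0 t Ht (fun c _ => dk c).
have Hk0 : kk 0 = 1.
  rewrite /kk /Lam /Fn !Rmult_0_l /Rdiv Rmult_0_l exp_0 Rminus_diag PG0 /=.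
  have -> : - ((0 * (0 * 1) + 2 * 0) * (INR n * / (2 * D))) = 0 by ring.
  rewrite exp_0; ring.
have := kd_ge0 (proj1 Hct); nra.
Qed.

Lemma part1_core t : 0 < t -> exp (Fn t) <= PG adj (Lam t).
Proof.
move=> Ht; have := kk_ge1 Ht; rewrite /kk => H.
have He := exp_pos (Fn t).
have -> : PG adj (Lam t) = PG adj (Lam t) * exp (- Fn t) * exp (Fn t).
  rewrite Rmult_assoc -exp_plus; have -> : - Fn t + Fn t = 0 by ring.
  by rewrite exp_0 Rmult_1_r.
nra.
Qed.

End Main2.


Lemma nat_above r : exists m : nat, r <= INR m.
Proof.
case: (Rle_lt_dec r 0) => Hr; first by exists 0%nat; rewrite /=.
have [H1 _] := archimed r.
have Hu : (0 < up r)%Z by apply: lt_0_IZR; lra.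
exists (Z.to_nat (up r)); rewrite INR_IZR_INZ Z2Nat.id; lia || lra.
Qed.

Lemma W_lower (z t : R) : 0 < z -> 0 <= t -> t * exp t <= z -> t <= LambertW z.
Proof.
move=> Hz Ht Hte; have [Hw Hwe] := LambertW_spec Hz.
case: (Rle_lt_dec t (LambertW z)) => // Hlt; exfalso.
have H1 : exp (LambertW z) < exp t by apply: exp_increasing.
have := exp_pos (LambertW z).
set w := LambertW z in Hw Hwe Hlt H1 *.
move=> H2; nra.
Qed.

Lemma asym (eps : R) : 0 < eps ->
  exists d0 : nat, forall d : nat, le d0 d -> le 1 d ->
    (1 - 2 * eps) * ln (INR d) ^ 2 <= LambertW (INR d * ln 2) ^ 2 + 2 * LambertW (INR d * ln 2).
Proof.
move=> He.
have Hln2 : 0 < ln 2 by have := ln_lt_2; lra.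
set c := 1 - eps.
set K := 2 * c / (eps * ln 2) + 1.
have [d0 Hd0] := nat_above (exp (2 / eps * ln (Rabs K + 1))).
exists d0 => d Hdd0 Hd1.
set w := LambertW (INR d * ln 2).
have HD1 : 1 <= INR d by apply: (le_INR 1).
have Hz : 0 < INR d * ln 2 by nra.
have [Hw Hwe] := LambertW_spec Hz.
rewrite -/w in Hw Hwe.
case: (Rle_lt_dec (1/2) eps) => Heps.
  have : 0 <= ln (INR d) ^ 2 by apply: pow2_ge_0.
  nra.
set l := ln (INR d).
have HDl : INR d = exp l by rewrite /l exp_ln; lra.
have Hl0 : 0 <= l.
  case: (Rle_lt_dec 0 l) => // Hl; exfalso.
  have := exp_increasing _ _ Hl; rewrite -HDl exp_0; lra.
have Hlbig : 2 / eps * ln (Rabs K + 1) <= l.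
  case: (Rle_lt_dec (2 / eps * ln (Rabs K + 1)) l) => // Hl; exfalso.
  have := exp_increasing _ _ Hl; rewrite -HDl.
  have := le_INR _ _ Hdd0; lra.
have HK : K < exp (eps * l / 2).
  have Ha : ln (Rabs K + 1) <= eps * l / 2.
    have -> : eps * l / 2 = eps / 2 * l by field.
    have -> : ln (Rabs K + 1) = eps / 2 * (2 / eps * ln (Rabs K + 1)) by field; lra.
    apply: Rmult_le_compat_l => //; lra.
  have HK1 : K < Rabs K + 1 by have := Rle_abs K; lra.
  have : exp (ln (Rabs K + 1)) <= exp (eps * l / 2).
    case: (Rle_lt_or_eq_dec _ _ Ha) => [Hlt|->]; last lra.
    by apply: Rlt_le; apply: exp_increasing.
  rewrite exp_ln; [lra | have := Rabs_pos K; lra].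
set t := c * l.
have Ht0 : 0 <= t by rewrite /t /c; nra.
have Hl_exp : l <= 2 / eps * exp (eps * l / 2).
  have H := exp_ineq1_le (eps * l / 2).
  have Hp : 0 < 2 / eps by apply: Rdiv_lt_0_compat; lra.
  have E : l = 2 / eps * (eps * l / 2) by field; lra.
  rewrite {1}E; apply: Rmult_le_compat_l; lra.
have Hte : t * exp t <= INR d * ln 2.
  rewrite HDl /t.
  have Hc : 0 < c by rewrite /c; lra.
  have Hpos1 := exp_pos (c * l).
  have Hpos2 := exp_pos (eps * l / 2).
  have S1 : c * l * exp (c * l) <= c * (2 / eps * exp (eps * l / 2)) * exp (c * l).
    apply: Rmult_le_compat_r; first lra.
    apply: Rmult_le_compat_l; lra.
  have S2 : exp (eps * l / 2) * exp (c * l) = exp (l - eps * l / 2).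
    by rewrite -exp_plus; congr exp; rewrite /c; field.
  have S3 : exp l = exp (eps * l / 2) * exp (l - eps * l / 2).
    by rewrite -exp_plus; congr exp; field.
  have Hpos3 := exp_pos (l - eps * l / 2).
  have S4 : c * (2 / eps * exp (eps * l / 2)) * exp (c * l) = 2 * c / eps * exp (l - eps * l / 2).
    rewrite -S2; field; lra.
  have S5 : 2 * c / eps <= ln 2 * exp (eps * l / 2).
    have : 2 * c / (eps * ln 2) < exp (eps * l / 2) by rewrite /K in HK; lra.
    move=> H.
    have -> : 2 * c / eps = ln 2 * (2 * c / (eps * ln 2)) by field; lra.
    apply: Rmult_le_compat_l; lra.
  rewrite S3.
  apply: Rle_trans S1 _; rewrite S4.
  have -> : exp (eps * l / 2) * exp (l - eps * l / 2) * ln 2 =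
            (ln 2 * exp (eps * l / 2)) * exp (l - eps * l / 2) by ring.
  apply: Rmult_le_compat_r; lra.
have Htw : t <= w by apply: W_lower.
have : t ^ 2 <= w ^ 2 by apply: pow_incr; lra.
have : (1 - 2 * eps) * l ^ 2 <= t ^ 2 by rewrite /t /c; have := pow2_ge_0 (eps * l); nra.
simpl; nra.
Qed.


Lemma exp_le_mono x y : x <= y -> exp x <= exp y.
Proof.
move=> H; case: (Rle_lt_or_eq_dec _ _ H) => [Hlt|->]; last lra.
by apply: Rlt_le; apply: exp_increasing.
Qed.

Lemma part1_full (d n : nat) (adj : rel 'I_n) :
     (1 <= d)%nat -> simple_graph adj -> triangle_free adj -> max_degree_eq adj d ->
     forall lam : R, 0 < lam ->
       let w := LambertW (INR d * ln (1 + lam)) in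
       exp ((w ^ 2 + 2 * w) * (INR n / (2 * INR d))) <= PG adj lam.
Proof.
move=> Hd [Hsym Hirr] Htf [Hdeg _] lam Hlam w.
have HD1 : 1 <= INR d by apply: (le_INR 1); apply/leP.
have Hdeg' : forall u, leq #|Nb adj u| d by move=> u; exact: Hdeg.
have Hln : 0 < ln (1 + lam) by rewrite -ln_1; apply: ln_increasing; lra.
have Hz : 0 < INR d * ln (1 + lam) by nra.
have [Hw Hwe] := LambertW_spec Hz.
rewrite -/w in Hw Hwe.
have HL : Lam d w = lam.
  rewrite /Lam.
  have -> : w * exp w / INR d = ln (1 + lam) by rewrite Hwe; field; lra.
  rewrite exp_ln; lra.
have := part1_core Hsym Hirr Htf Hdeg' HD1 Hw.
by rewrite HL.
Qed.

Lemma PG1 (n : nat) (adj : rel 'I_n) : PG adj 1 = INR (num_indep adj).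
Proof.
rewrite /PG /num_indep.
have -> : \big[Rplus/R0]_(J : {set 'I_n} | independent adj J) (1 ^ #|J|) =
          \big[Rplus/R0]_(J : {set 'I_n} | independent adj J) INR 1.
  by apply: eq_bigr => J _; rewrite pow1.
rewrite -INR_sum; congr INR.
rewrite -sum1_card; apply: eq_bigl => J; by rewrite inE.
Qed.

Theorem theorem1p5 :
  (forall (d n : nat) (adj : rel 'I_n),
     (1 <= d)%nat -> simple_graph adj -> triangle_free adj -> max_degree_eq adj d ->
     forall lam : R, 0 < lam ->
       let w := LambertW (INR d * ln (1 + lam)) in
       exp ((w ^ 2 + 2 * w) * (INR n / (2 * INR d))) <= PG adj lam)
  /\
  (forall eps : R, 0 < eps ->
     exists d0 : nat, forall (d n : nat) (adj : rel 'I_n),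
       (d0 <= d)%nat -> (1 <= d)%nat ->
       simple_graph adj -> triangle_free adj -> max_degree_eq adj d ->
       exp ((1/2 - eps) * (ln (INR d) ^ 2 / INR d) * INR n)
          <= INR (num_indep adj)).
Proof.
split; first exact: part1_full.
move=> eps Heps; have [d0 Hd0] := asym Heps.
exists d0 => d n adj Hdd0 Hd Hsg Htf Hmd.
have H1 := @part1_full d n adj Hd Hsg Htf Hmd 1 Rlt_0_1.
rewrite /= (_ : 1 + 1 = 2) in H1; last ring.
rewrite -PG1; apply: Rle_trans H1.
have HD1 : 1 <= INR d by apply: (le_INR 1); apply/leP.
have Ha := Hd0 d (elimT leP Hdd0) (elimT leP Hd).
apply: exp_le_mono.
have -> : (1 / 2 - eps) * (ln (INR d) ^ 2 / INR d) * INR n =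
          INR n / (2 * INR d) * ((1 - 2 * eps) * ln (INR d) ^ 2) by field; lra.
rewrite (Rmult_comm (_ ^ 2 + _)).
apply: Rmult_le_compat_l => //.
apply: Rmult_le_pos; first exact: pos_INR.
apply: Rlt_le; apply: Rinv_0_lt_compat; lra.
Qed.
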